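(* Let $L$ be a finite relational language and $\mathbb X,\mathbb Y$ be $L$-structures. (I) The following are equivalent: (a) $\mathbb X\preccurlyeq_c^{\mathrm{fin}}\mathbb Y$, i.e. there is a sequence $\langle\Pi_r:r<\omega\rangle$ of nonempty subsets of $\mathrm{PC}(\mathbb X,\mathbb Y)$ such that for every $r<\omega$: (f1) for all $f\in\Pi_{r+1}$ and $x\in X$ there is $g\in\Pi_r$ with $x\in\operatorname{dom}g$ and $f\subseteq g$, and (f2) for all $f\in\Pi_{r+1}$ and $y\in Y$ there is $g\in\Pi_r$ with $y\in\operatorname{ran}g$ and $f\subseteq g$; (b) for each $n\in\omega$, player II has a winning strategy in the game $G^{\preccurlyeq_c}_n(\mathbb X,\mathbb Y)$; (c) $\mathbb X\lll_{\mathcal P}\mathbb Y$; (d) $\mathbb Y\lll_{\mathcal N}\mathbb X$. (II) The following are equivalent: (a) $\mathbb X\preccurlyeq_c^{\mathrm{fin}}\mathbb Y$ and $\mathbb Y\preccurlyeq_c^{\mathrm{fin}}\mathbb X$; (b) for each $n\in\omega$, player II has winning strategies in both $G^{\preccurlyeq_c}_n(\mathbb X,\mathbb Y)$ and $G^{\preccurlyeq_c}_n(\mathbb Y,\mathbb X)$; (c) $\mathbb X\equiv_{\mathcal P}\mathbb Y$; (d) $\mathbb X\equiv_{\mathcal N}\mathbb Y$; (e) $\mathbb X\equiv_{\mathcal P\cup\mathcal N}\mathbb Y$; (f) $\mathbb X\lll_{\mathcal P\cup\mathcal N}\mathbb Y$.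
   Context: $L=\langle R_i:i\in I\rangle$ is a relational language, $R_i$ of arity $n_i$; for an $L$-structure $\mathbb X$ with domain $X$, $R_i^{\mathbb X}$ is the interpretation of $R_i$. For a map $f$ and tuple $\bar x=\langle x_0,\dots,x_{k-1}\rangle$ write $f\bar x=\langle f(x_0),\dots,f(x_{k-1})\rangle$. A partial condensation from $\mathbb X$ to $\mathbb Y$ is a bijection $f$ from a set $\operatorname{dom}f\subseteq X$ onto a set $\operatorname{ran}f\subseteq Y$ such that for all $i\in I$ and $\bar x\in(\operatorname{dom}f)^{n_i}$, $\bar x\in R_i^{\mathbb X}$ implies $f\bar x\in R_i^{\mathbb Y}$; $\mathrm{PC}(\mathbb X,\mathbb Y)$ is the set of these. For $n\in\omega$, the game $G^{\preccurlyeq_c}_n(\mathbb X,\mathbb Y)$ has $n$ steps $k<n$; at step $k$ player I either chooses $x_k\in X$ and then player II chooses $y_k\in Y$, or player I chooses $y_k\in Y$ and then II chooses $x_k\in X$. Player II wins iff $\{\langle x_k,y_k\rangle:k<n\}\in\mathrm{PC}(\mathbb X,\mathbb Y)$. A strategy for II determines its move from the previous moves and I's current choice; it is winning if II wins every play in which it is followed. Formula classes: $\mathcal P_0$ consists of all atomic formulas ($v_\alpha=v_\beta$, $R_i(v_{\alpha_1},\dots,v_{\alpha_{n_i}})$) and all $\neg\,v_\alpha=v_\beta$. $\mathcal N_0$ consists of all $\neg R_i(v_{\alpha_1},\dots,v_{\alpha_{n_i}})$, all $v_\alpha=v_\beta$ and all $\neg\,v_\alpha=v_\beta$. $\mathcal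 P$ (resp. $\mathcal N$), the $R$-positive (resp. $R$-negative) first order formulas, is the closure of $\mathcal P_0$ (resp. $\mathcal N_0$) under finite conjunctions, finite disjunctions, $\forall v$ and $\exists v$ (no negation). For a class $\mathcal F$ of formulas, $\mathbb X\lll_{\mathcal F}\mathbb Y$ means every sentence of $\mathcal F$ true in $\mathbb X$ is true in $\mathbb Y$, and $\mathbb X\equiv_{\mathcal F}\mathbb Y$ means they satisfy the same sentences of $\mathcal F$. *)

(* Defs.v *)
From Stdlib Require Import List.
Import ListNotations.

Record language := { Rsym : Type; arity : Rsym -> nat }.

Definition finite_language (L : language) : Prop :=
  exists l : list (Rsym L), forall i, In i l.

(** L-structures.  The interpretation of R_i is a set of lists; only lists of
    length [arity L i] (i.e. n_i-tuples) are ever consulted. *)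
Record structure (L : language) := {
  carrier :> Type;
  interp : forall i : Rsym L, list carrier -> Prop }.
Arguments carrier {L} _.
Arguments interp {L} _ _ _.

(** Partial maps are represented by their graphs. *)
Definition dom {A B : Type} (f : A -> B -> Prop) (x : A) : Prop := exists y, f x y.
Definition ran {A B : Type} (f : A -> B -> Prop) (y : B) : Prop := exists x, f x y.
Definition subrel {A B : Type} (f g : A -> B -> Prop) : Prop :=
  forall x y, f x y -> g x y.

Definition PC {L : language} (X Y : structure L) (f : X -> Y -> Prop) : Prop :=
  (forall x y y', f x y -> f x y' -> y = y') /\
  (forall x x' y, f x y -> f x' y -> x = x') /\
  (forall (i : Rsym L) (xs : list X) (ys : list Y),
      length xs = arity L i -> Forall2 f xs ys ->
      interp X i xs -> interp Y i ys).

Definition fin_cond {L : language} (X Y : structure L) : Prop :=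
  exists Pi : nat -> (X -> Y -> Prop) -> Prop,
    (forall r, exists f, Pi r f) /\
    (forall r f, Pi r f -> PC X Y f) /\
    (forall r f, Pi (S r) f -> forall x : X,
        exists g, Pi r g /\ dom g x /\ subrel f g) /\
    (forall r f, Pi (S r) f -> forall y : Y,
        exists g, Pi r g /\ ran g y /\ subrel f g).

(** The game G_n^{≼_c}(X,Y).  A history records, for each step, whether
    player I chose in X (true) or in Y (false), and the pair (x_k, y_k). *)
Definition history {L : language} (X Y : structure L) := list (bool * X * Y).

Record strategyII {L : language} (X Y : structure L) := {
  respX : history X Y -> X -> Y;
  respY : history X Y -> Y -> X }.
Arguments respX {L X Y} _ _ _.
Arguments respY {L X Y} _ _ _.

Fixpoint play {L : language} {X Y : structure L} (s : strategyII X Y)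
    (ms : list (X + Y)) (h : history X Y) : history X Y :=
  match ms with
  | [] => h
  | inl x :: ms' => play s ms' (h ++ [(true, x, respX s h x)])
  | inr y :: ms' => play s ms' (h ++ [(false, respY s h y, y)])
  end.

Definition winning {L : language} {X Y : structure L} (n : nat)
    (s : strategyII X Y) : Prop :=
  forall ms : list (X + Y), length ms = n ->
    PC X Y (fun x y => exists b, In (b, x, y) (play s ms [])).

Definition II_wins {L : language} (n : nat) (X Y : structure L) : Prop :=
  exists s : strategyII X Y, winning n s.

(** First-order formulas (negation only in front of atomic formulas).
    [FRel i vs] is R_i(v_{vs 0}, ..., v_{vs (n_i - 1)}). *)
Inductive formula (L : language) : Type :=
| FEq : nat -> nat -> formula L
| FNeq : nat -> nat -> formula L
| FRel : Rsym L -> (nat -> nat) -> formula L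
| FNRel : Rsym L -> (nat -> nat) -> formula L
| FAnd : formula L -> formula L -> formula L
| FOr : formula L -> formula L -> formula L
| FAll : nat -> formula L -> formula L
| FEx : nat -> formula L -> formula L.
Arguments FEq {L}. Arguments FNeq {L}. Arguments FRel {L}. Arguments FNRel {L}.
Arguments FAnd {L}. Arguments FOr {L}. Arguments FAll {L}. Arguments FEx {L}.

Fixpoint free_in {L : language} (v : nat) (phi : formula L) : Prop :=
  match phi with
  | FEq a b | FNeq a b => v = a \/ v = b
  | FRel i vs | FNRel i vs => exists k, k < arity L i /\ vs k = v
  | FAnd p q | FOr p q => free_in v p \/ free_in v q
  | FAll w p | FEx w p => v <> w /\ free_in v p
  end.

Definition sentence {L : language} (phi : formula L) : Prop :=
  forall v, ~ free_in v phi.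

Definition upd {A : Type} (e : nat -> A) (v : nat) (a : A) : nat -> A :=
  fun w => if Nat.eqb w v then a else e w.

Fixpoint sat {L : language} (M : structure L) (e : nat -> M) (phi : formula L)
    : Prop :=
  match phi with
  | FEq a b => e a = e b
  | FNeq a b => e a <> e b
  | FRel i vs => interp M i (map (fun k => e (vs k)) (seq 0 (arity L i)))
  | FNRel i vs => ~ interp M i (map (fun k => e (vs k)) (seq 0 (arity L i)))
  | FAnd p q => sat M e p /\ sat M e q
  | FOr p q => sat M e p \/ sat M e q
  | FAll v p => forall a : M, sat M (upd e v a) p
  | FEx v p => exists a : M, sat M (upd e v a) p
  end.

(** Truth of a sentence in a (nonempty) structure. *)
Definition holds {L : language} (M : structure L) (phi : formula L) : Prop :=
  forall e : nat -> M, sat M e phi.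

Fixpoint is_P {L : language} (phi : formula L) : Prop :=
  match phi with
  | FEq _ _ | FNeq _ _ | FRel _ _ => True
  | FNRel _ _ => False
  | FAnd p q | FOr p q => is_P p /\ is_P q
  | FAll _ p | FEx _ p => is_P p
  end.

Fixpoint is_N {L : language} (phi : formula L) : Prop :=
  match phi with
  | FEq _ _ | FNeq _ _ | FNRel _ _ => True
  | FRel _ _ => False
  | FAnd p q | FOr p q => is_N p /\ is_N q
  | FAll _ p | FEx _ p => is_N p
  end.

Definition is_PN {L : language} (phi : formula L) : Prop := is_P phi \/ is_N phi.

Definition lll {L : language} (F : formula L -> Prop) (X Y : structure L) : Prop :=
  forall phi, F phi -> sentence phi -> holds X phi -> holds Y phi.

Definition equivF {L : language} (F : formula L -> Prop) (X Y : structure L)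
    : Prop :=
  forall phi, F phi -> sentence phi -> (holds X phi <-> holds Y phi).

(* Main.v *)
Require Import Defs.
From Stdlib Require Import List Arith Lia Classical ClassicalEpsilon.
Import ListNotations.

Section Gen.
Context {L : language}.

Definition env {A : Type} (l : list A) (d : A) : nat -> A := fun i => nth i l d.

Lemma sat_ext (M : structure L) : forall phi (e e' : nat -> M),
  (forall v, free_in v phi -> e v = e' v) -> (sat M e phi <-> sat M e' phi).
Proof.
  induction phi as [a b|a b|i vs|i vs|p1 IH1 p2 IH2|p1 IH1 p2 IH2|v p IH|v p IH];
    intros e e' H; simpl in *.
  - rewrite (H a) by auto. rewrite (H b) by auto. tauto.
  - rewrite (H a) by auto. rewrite (H b) by auto. tauto.
  - rewrite (map_ext_in _ (fun k => e' (vs k))). tauto.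
    intros k Hk. apply in_seq in Hk. apply H. exists k. split; [lia|auto].
  - rewrite (map_ext_in _ (fun k => e' (vs k))). tauto.
    intros k Hk. apply in_seq in Hk. apply H. exists k. split; [lia|auto].
  - rewrite (IH1 e e'), (IH2 e e') by (intros; apply H; auto). tauto.
  - rewrite (IH1 e e'), (IH2 e e') by (intros; apply H; auto). tauto.
  - assert (Hu : forall a, sat M (upd e v a) p <-> sat M (upd e' v a) p).
    { intro a. apply IH. intros w Hw. unfold upd. destruct (Nat.eqb w v) eqn:E; auto.
      apply H. split; auto. apply Nat.eqb_neq; exact E. }
    split; intros Hs a; apply Hu; auto.
  - assert (Hu : forall a, sat M (upd e v a) p <-> sat M (upd e' v a) p).
    { intro a. apply IH. intros w Hw. unfold upd. destruct (Nat.eqb w v) eqn:E; auto.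
      apply H. split; auto. apply Nat.eqb_neq; exact E. }
    split; intros [a Ha]; exists a; apply Hu; auto.
Qed.

Lemma holds_sentence (M : structure L) phi (e : nat -> M) :
  sentence phi -> (holds M phi <-> sat M e phi).
Proof.
  intros Hs. split.
  - intro H. apply H.
  - intros H e'. apply (proj1 (sat_ext M phi e e' (fun v Hv => False_ind _ (Hs v Hv)))). exact H.
Qed.

Fixpoint neg (phi : formula L) : formula L :=
  match phi with
  | FEq a b => FNeq a b | FNeq a b => FEq a b
  | FRel i vs => FNRel i vs | FNRel i vs => FRel i vs
  | FAnd p q => FOr (neg p) (neg q) | FOr p q => FAnd (neg p) (neg q)
  | FAll v p => FEx v (neg p) | FEx v p => FAll v (neg p)
  end.

Lemma sat_neg (M : structure L) : forall phi (e : nat -> M), sat M e (neg phi) <-> ~ sat M e phi.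
Proof.
  induction phi as [a b|a b|i vs|i vs|p1 IH1 p2 IH2|p1 IH1 p2 IH2|v p IH|v p IH];
    intros e; simpl.
  - tauto.
  - split; [tauto| apply NNPP].
  - tauto.
  - split; [tauto| apply NNPP].
  - rewrite IH1, IH2. split; [tauto| apply not_and_or].
  - rewrite IH1, IH2. tauto.
  - split.
    + intros [a Ha] H. apply IH in Ha. apply Ha, H.
    + intro H. apply not_all_ex_not in H. destruct H as [a Ha]. exists a. apply IH; auto.
  - split.
    + intros H [a Ha]. specialize (H a). apply IH in H. auto.
    + intros H a. apply IH. intro Ha. apply H. eauto.
Qed.

Lemma free_neg v : forall phi, free_in v (neg phi) <-> free_in v phi.
Proof.
  induction phi; simpl; try tauto; try (rewrite IHphi1, IHphi2; tauto); rewrite IHphi; tauto.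
Qed.

Lemma P_neg : forall phi, is_P phi -> is_N (neg phi).
Proof. induction phi; simpl; tauto. Qed.
Lemma N_neg : forall phi, is_N phi -> is_P (neg phi).
Proof. induction phi; simpl; tauto. Qed.

Lemma sentence_neg phi : sentence phi -> sentence (neg phi).
Proof. intros H v Hv. apply (H v). apply free_neg; auto. Qed.

Lemma lll_P_N (X Y : structure L) : inhabited X -> inhabited Y ->
  lll is_P X Y -> lll is_N Y X.
Proof.
  intros [x0] [y0] H phi HN Hs HY. apply NNPP; intro HnX.
  assert (HXn : holds X (neg phi)).
  { intro e. apply sat_neg. intro Hs'. apply HnX.
    apply (proj2 (holds_sentence X phi e Hs)). auto. }
  apply H in HXn; [| apply N_neg; auto | apply sentence_neg; auto].
  specialize (HXn (fun _ => y0)). apply sat_neg in HXn. apply HXn. apply HY.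
Qed.

Lemma lll_N_P (X Y : structure L) : inhabited X -> inhabited Y ->
  lll is_N Y X -> lll is_P X Y.
Proof.
  intros [x0] [y0] H phi HP Hs HX. apply NNPP; intro HnY.
  assert (HYn : holds Y (neg phi)).
  { intro e. apply sat_neg. intro Hs'. apply HnY.
    apply (proj2 (holds_sentence Y phi e Hs)). auto. }
  apply H in HYn; [| apply P_neg; auto | apply sentence_neg; auto].
  specialize (HYn (fun _ => x0)). apply sat_neg in HYn. apply HYn. apply HX.
Qed.

Fixpoint qr (phi : formula L) : nat :=
  match phi with
  | FAnd p q | FOr p q => max (qr p) (qr q)
  | FAll _ p | FEx _ p => S (qr p)
  | _ => 0
  end.

Definition bigAnd (l : list (formula L)) : formula L :=
  fold_right FAnd (FAll 0 (FEq 0 0)) l.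
Definition bigOr (l : list (formula L)) : formula L :=
  fold_right FOr (FEx 0 (FNeq 0 0)) l.

Lemma sat_bigAnd (M : structure L) e l : sat M e (bigAnd l) <-> forall c, In c l -> sat M e c.
Proof.
  induction l as [|c l IH]; simpl.
  - split; [tauto| intros _ a; reflexivity].
  - rewrite IH. split; [intros [H1 H2] c' [<-|Hc]; auto | intros H; split; auto].
Qed.

Lemma sat_bigOr (M : structure L) e l : sat M e (bigOr l) <-> exists c, In c l /\ sat M e c.
Proof.
  induction l as [|c l IH]; simpl.
  - split; [intros [a Ha]; exfalso; apply Ha; reflexivity | intros [c [[] _]]].
  - rewrite IH. split.
    + intros [H|[c' [H1 H2]]]; eauto.
    + intros [c' [[<-|H1] H2]]; eauto.
Qed.

Lemma free_bigAnd v l : free_in v (bigAnd l) -> exists c, In c l /\ free_in v c.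
Proof.
  induction l as [|c l IH]; simpl.
  - intros [H1 [H2|H2]]; contradiction.
  - intros [H|H]; eauto. destruct (IH H) as [c' [? ?]]; eauto.
Qed.
Lemma free_bigOr v l : free_in v (bigOr l) -> exists c, In c l /\ free_in v c.
Proof.
  induction l as [|c l IH]; simpl.
  - intros [H1 [H2|H2]]; contradiction.
  - intros [H|H]; eauto. destruct (IH H) as [c' [? ?]]; eauto.
Qed.
Lemma P_bigAnd l : (forall c, In c l -> is_P c) -> is_P (bigAnd l).
Proof. induction l; simpl; auto. Qed.
Lemma P_bigOr l : (forall c, In c l -> is_P c) -> is_P (bigOr l).
Proof. induction l; simpl; auto. Qed.

Lemma env_upd {A : Type} (l : list A) d a v : v < S (length l) ->
  upd (env l d) (length l) a v = env (l ++ [a]) d v.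
Proof.
  intros Hv. unfold upd, env. destruct (Nat.eqb v (length l)) eqn:E.
  - apply Nat.eqb_eq in E. subst. rewrite app_nth2 by lia. rewrite Nat.sub_diag. reflexivity.
  - apply Nat.eqb_neq in E. rewrite app_nth1 by lia. reflexivity.
Qed.

End Gen.

Section XY.
Context {L : language} (X Y : structure L).

Definition PCl (p : list (X * Y)) : Prop := PC X Y (fun x y => In (x,y) p).

Lemma PC_sub (f g : X -> Y -> Prop) : subrel g f -> PC X Y f -> PC X Y g.
Proof.
  intros Hs [H1 [H2 H3]]. split; [|split].
  - intros x y y' a b. eapply H1; apply Hs; eauto.
  - intros x x' y a b. eapply H2; apply Hs; eauto.
  - intros i xs ys Hl HF. apply H3; auto. eapply Forall2_impl; [|exact HF]. exact Hs.
Qed.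

Fixpoint W (r : nat) (p : list (X * Y)) : Prop :=
  match r with
  | 0 => PCl p
  | S r' => PCl p /\ (forall x, exists y, W r' (p ++ [(x,y)]))
                 /\ (forall y, exists x, W r' (p ++ [(x,y)]))
  end.

Lemma W_PC r p : W r p -> PCl p.
Proof. destruct r; simpl; tauto. Qed.

Lemma Pi_W (Pi : nat -> (X -> Y -> Prop) -> Prop) :
 (forall r f, Pi r f -> PC X Y f) ->
 (forall r f, Pi (S r) f -> forall x, exists g, Pi r g /\ dom g x /\ subrel f g) ->
 (forall r f, Pi (S r) f -> forall y, exists g, Pi r g /\ ran g y /\ subrel f g) ->
 forall r f, Pi r f -> forall p, (forall x y, In (x,y) p -> f x y) -> W r p.
Proof.
  intros HPC H1 H2. induction r as [|r IHr]; intros f Hf p Hp.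
  - simpl. unfold PCl. apply (PC_sub f); [exact Hp| eapply HPC; eauto].
  - simpl. split; [unfold PCl; apply (PC_sub f); [exact Hp| eapply HPC; eauto]|split].
    + intro x. destruct (H1 r f Hf x) as [g [Hg [[y Hy] Hfg]]]. exists y.
      apply (IHr g Hg). intros a b Hab. apply in_app_or in Hab.
      destruct Hab as [Hab|Hab]. apply Hfg, Hp, Hab. simpl in Hab.
      destruct Hab as [Hab|[]]. inversion Hab; subst; auto.
    + intro y. destruct (H2 r f Hf y) as [g [Hg [[x Hx] Hfg]]]. exists x.
      apply (IHr g Hg). intros a b Hab. apply in_app_or in Hab.
      destruct Hab as [Hab|Hab]. apply Hfg, Hp, Hab. simpl in Hab.
      destruct Hab as [Hab|[]]. inversion Hab; subst; auto.
Qed.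

Lemma fin_W : fin_cond X Y -> forall n, W n [].
Proof.
  intros [Pi [Hne [HPC [H1 H2]]]] n. destruct (Hne n) as [f Hf].
  apply (Pi_W Pi HPC H1 H2 n f Hf). intros x y [].
Qed.

Lemma W_fin : (forall n, W n []) -> fin_cond X Y.
Proof.
  intro HW. exists (fun r f => exists p, W r p /\ forall x y, f x y <-> In (x,y) p).
  split; [|split; [|split]].
  - intro r. exists (fun x y => In (x,y) (@nil (X*Y))). exists []. split; [apply HW| tauto].
  - intros r f [p [Hp Hf]]. apply (PC_sub (fun x y => In (x,y) p)).
    intros x y H; apply Hf; auto. apply (W_PC r); auto.
  - intros r f [p [Hp Hf]] x. simpl in Hp. destruct Hp as [_ [Hfw _]].
    destruct (Hfw x) as [y Hy]. exists (fun a b => In (a,b) (p ++ [(x,y)])).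
    split; [exists (p ++ [(x,y)]); split; [auto| tauto]| split].
    + exists y. apply in_or_app. right. left. reflexivity.
    + intros a b Hab. apply in_or_app. left. apply Hf. auto.
  - intros r f [p [Hp Hf]] y. simpl in Hp. destruct Hp as [_ [_ Hbw]].
    destruct (Hbw y) as [x Hx]. exists (fun a b => In (a,b) (p ++ [(x,y)])).
    split; [exists (p ++ [(x,y)]); split; [auto| tauto]| split].
    + exists x. apply in_or_app. right. left. reflexivity.
    + intros a b Hab. apply in_or_app. left. apply Hf. auto.
Qed.

Lemma Forall2_map {A B C : Type} (R : A -> B -> Prop) (f : C -> A) (g : C -> B) l :
  (forall c, In c l -> R (f c) (g c)) -> Forall2 R (map f l) (map g l).
Proof. induction l; simpl; intros; constructor; auto. Qed.

Lemma W_sat : forall phi, is_P phi -> forall r p (eX : nat -> X) (eY : nat -> Y),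
  qr phi <= r -> W r p ->
  (forall v, free_in v phi -> In (eX v, eY v) p) -> sat X eX phi -> sat Y eY phi.
Proof.
  induction phi as [a b|a b|i vs|i vs|p1 IH1 p2 IH2|p1 IH1 p2 IH2|v p1 IH|v p1 IH];
    intros HP r pl eX eY Hr HW Hf Hs; simpl in *.
  - destruct (W_PC _ _ HW) as [H1 _].
    apply (H1 (eX a)); [apply Hf; auto| rewrite Hs; apply Hf; auto].
  - intro He. apply Hs. destruct (W_PC _ _ HW) as [_ [H2 _]].
    apply (H2 (eX a) (eX b) (eY a)); [apply Hf; auto| rewrite He; apply Hf; auto].
  - destruct (W_PC _ _ HW) as [_ [_ H3]].
    apply (H3 i (map (fun k => eX (vs k)) (seq 0 (arity L i)))); [ | | exact Hs].
    + rewrite length_map, length_seq; auto.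
    + apply Forall2_map. intros c Hc. apply Hf. apply in_seq in Hc. exists c. split; [lia|auto].
  - contradiction.
  - destruct HP as [HP1 HP2]. destruct Hs as [Hs1 Hs2]. split.
    + apply (IH1 HP1 r pl eX eY); auto; try lia.
    + apply (IH2 HP2 r pl eX eY); auto; try lia.
  - destruct HP as [HP1 HP2]. destruct Hs as [Hs1|Hs2].
    + left. apply (IH1 HP1 r pl eX eY); auto; try lia.
    + right. apply (IH2 HP2 r pl eX eY); auto; try lia.
  - destruct r as [|r]; [lia|]. simpl in HW. destruct HW as [_ [_ Hback]].
    intro b. destruct (Hback b) as [x Hx].
    apply (IH HP r (pl ++ [(x,b)]) (upd eX v x) (upd eY v b)); [lia | exact Hx | | apply Hs].
    intros w Hw. unfold upd. destruct (Nat.eqb w v) eqn:E.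
    + apply in_or_app; right; left; reflexivity.
    + apply in_or_app; left. apply Hf. split; auto. apply Nat.eqb_neq; auto.
  - destruct r as [|r]; [lia|]. simpl in HW. destruct HW as [_ [Hforth _]].
    destruct Hs as [x Hx]. destruct (Hforth x) as [y Hy]. exists y.
    apply (IH HP r (pl ++ [(x,y)]) (upd eX v x) (upd eY v y)); [lia | exact Hy | | apply Hx].
    intros w Hw. unfold upd. destruct (Nat.eqb w v) eqn:E.
    + apply in_or_app; right; left; reflexivity.
    + apply in_or_app; left. apply Hf. split; auto. apply Nat.eqb_neq; auto.
Qed.

Lemma W_lll : inhabited X -> (forall n, W n []) -> lll is_P X Y.
Proof.
  intros [x0] HW phi HP Hs HX eY.
  apply (W_sat phi HP (qr phi) [] (fun _ => x0) eY); auto.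
Qed.

Definition mp (h : history X Y) : list (X*Y) := map (fun t => (snd (fst t), snd t)) h.

Lemma in_mp h x y : In (x,y) (mp h) <-> exists b, In (b,x,y) h.
Proof.
  unfold mp. rewrite in_map_iff. split.
  - intros [[[b a] c] [E Hin]]. simpl in E. inversion E; subst. eauto.
  - intros [b Hb]. exists (b,x,y). auto.
Qed.

Lemma mp_app h b x y : mp (h ++ [(b,x,y)]) = mp h ++ [(x,y)].
Proof. unfold mp. rewrite map_app. reflexivity. Qed.

Lemma play_ext (s : strategyII X Y) (ms : list (X+Y)) (h : history X Y) t : In t h -> In t (play s ms h).
Proof.
  revert h; induction ms as [|m ms IH]; intros h H; simpl; auto.
  destruct m; apply IH; apply in_or_app; left; auto.
Qed.

Lemma win_PC (x0 : X) (s : strategyII X Y) n (h : history X Y) :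
  (forall ms : list (X+Y), length ms = n ->
     PC X Y (fun x y => exists b, In (b,x,y) (play s ms h))) -> PCl (mp h).
Proof.
  intros H. eapply PC_sub; [| apply (H (repeat (inl x0) n)); apply repeat_length].
  intros x y Hxy. apply in_mp in Hxy. destruct Hxy as [b Hb]. exists b. apply play_ext. auto.
Qed.

Lemma win_W (x0 : X) (s : strategyII X Y) : forall n h,
  (forall ms : list (X+Y), length ms = n ->
     PC X Y (fun x y => exists b, In (b,x,y) (play s ms h))) -> W n (mp h).
Proof.
  induction n as [|n IHn]; intros h H.
  - simpl. eapply win_PC; eauto.
  - simpl. split; [eapply win_PC; eauto| split].
    + intro x. exists (respX s h x). rewrite <- (mp_app h true). apply IHn.
      intros ms Hms. specialize (H (inl x :: ms)). simpl in H. apply H. simpl; lia.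
    + intro y. exists (respY s h y). rewrite <- (mp_app h false). apply IHn.
      intros ms Hms. specialize (H (inr y :: ms)). simpl in H. apply H. simpl; lia.
Qed.

Lemma II_W (x0 : X) n : II_wins n X Y -> W n [].
Proof. intros [s Hs]. change (W n (mp [])). apply (win_W x0 s n []). exact Hs. Qed.

Definition strat (n : nat) (x0 : X) (y0 : Y) : strategyII X Y :=
  {| respX := fun h x => epsilon (inhabits y0) (fun y => W (n - S (length h)) (mp h ++ [(x,y)]));
     respY := fun h y => epsilon (inhabits x0) (fun x => W (n - S (length h)) (mp h ++ [(x,y)])) |}.

Lemma strat_ok n (x0 : X) (y0 : Y) : forall ms h, length h + length ms = n -> W (length ms) (mp h) ->
  PC X Y (fun x y => exists b, In (b,x,y) (play (strat n x0 y0) ms h)).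
Proof.
  induction ms as [|m ms IH]; intros h Hl HW.
  - simpl. simpl in HW. apply (PC_sub (fun x y => In (x,y) (mp h))); [intros x y Hxy; apply in_mp; auto | exact HW].
  - simpl in Hl. cbn [length W] in HW. destruct HW as [_ [Hf Hb]].
    assert (E : n - S (length h) = length ms) by lia.
    destruct m as [x|y]; cbn [play].
    + apply IH. rewrite length_app; simpl; lia. rewrite mp_app. cbn [respX strat].
      rewrite <- E. apply (epsilon_spec (inhabits y0) (fun y => W (n - S (length h)) (mp h ++ [(x,y)]))).
      rewrite E. apply Hf.
    + apply IH. rewrite length_app; simpl; lia. rewrite mp_app. cbn [respY strat].
      rewrite <- E. apply (epsilon_spec (inhabits x0) (fun x => W (n - S (length h)) (mp h ++ [(x,y)]))).
      rewrite E. apply Hb.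
Qed.

Lemma W_II (x0 : X) (y0 : Y) n : W n [] -> II_wins n X Y.
Proof.
  intros HW. exists (strat n x0 y0). intros ms Hms. apply strat_ok; simpl; [lia|].
  rewrite Hms. exact HW.
Qed.

End XY.

Section H.
Context {L : language} (X Y : structure L) (lR : list (Rsym L)) (HlR : forall i, In i lR)
  (dx : X) (dy : Y).

Fixpoint tuples (n k : nat) : list (list nat) :=
  match n with
  | 0 => [[]]
  | S n' => flat_map (fun i => map (cons i) (tuples n' k)) (seq 0 k)
  end.

Lemma tuples_in k : forall n t, length t = n -> (forall a, In a t -> a < k) -> In t (tuples n k).
Proof.
  induction n as [|n IH]; intros [|a t] Hl Ht; simpl in *; try discriminate.
  - left; auto.
  - apply in_flat_map. exists a. split.
    + apply in_seq. split; [lia| apply Ht; left; auto].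
    + apply in_map. apply IH; auto.
Qed.

Lemma tuples_inv k : forall n t, In t (tuples n k) -> length t = n /\ forall a, In a t -> a < k.
Proof.
  induction n as [|n IH]; intros t Ht; simpl in *.
  - destruct Ht as [<-|[]]. simpl. split; auto. intros a [].
  - apply in_flat_map in Ht. destruct Ht as [a [Ha Ht]]. apply in_map_iff in Ht.
    destruct Ht as [t' [<- Ht']]. apply IH in Ht'. destruct Ht' as [H1 H2].
    apply in_seq in Ha. simpl. split; [lia|]. intros b [<-|Hb]; [lia| auto].
Qed.

Definition atoms (k : nat) : list (formula L) :=
  flat_map (fun i => flat_map (fun j => [FEq i j; FNeq i j]) (seq 0 k)) (seq 0 k) ++
  flat_map (fun R => map (fun t => FRel R (fun m => nth m t 0)) (tuples (arity L R) k)) lR.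

Lemma atoms_free k a v : In a (atoms k) -> free_in v a -> v < k.
Proof.
  unfold atoms. intros Ha Hv. apply in_app_or in Ha. destruct Ha as [Ha|Ha].
  - apply in_flat_map in Ha. destruct Ha as [i [Hi Ha]]. apply in_flat_map in Ha.
    destruct Ha as [j [Hj Ha]]. apply in_seq in Hi, Hj.
    simpl in Ha. destruct Ha as [<-|[<-|[]]]; simpl in Hv; lia.
  - apply in_flat_map in Ha. destruct Ha as [R [_ Ha]]. apply in_map_iff in Ha.
    destruct Ha as [t [<- Ht]]. apply tuples_inv in Ht. destruct Ht as [Hl Ht].
    simpl in Hv. destruct Hv as [m [Hm <-]]. apply Ht. apply nth_In. lia.
Qed.

Lemma atoms_P k a : In a (atoms k) -> is_P a.
Proof.
  unfold atoms. intros Ha. apply in_app_or in Ha. destruct Ha as [Ha|Ha].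
  - apply in_flat_map in Ha. destruct Ha as [i [Hi Ha]]. apply in_flat_map in Ha.
    destruct Ha as [j [Hj Ha]]. simpl in Ha. destruct Ha as [<-|[<-|[]]]; simpl; auto.
  - apply in_flat_map in Ha. destruct Ha as [R [_ Ha]]. apply in_map_iff in Ha.
    destruct Ha as [t [<- Ht]]. simpl; auto.
Qed.

Lemma atoms_eq k i j : i < k -> j < k -> In (FEq i j) (atoms k) /\ In (FNeq i j) (atoms k).
Proof.
  intros Hi Hj. unfold atoms. split; apply in_or_app; left; apply in_flat_map; exists i;
    (split; [apply in_seq; lia|]); apply in_flat_map; exists j; (split; [apply in_seq; lia|]);
    simpl; auto.
Qed.

Lemma atoms_rel k R t : length t = arity L R -> (forall a, In a t -> a < k) ->
  In (FRel R (fun m => nth m t 0)) (atoms k).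
Proof.
  intros Hl Ht. unfold atoms. apply in_or_app; right. apply in_flat_map. exists R.
  split; [apply HlR|]. apply in_map_iff. exists t. split; [reflexivity|]. apply tuples_in; auto.
Qed.

Definition EMb (P : Prop) : bool := if excluded_middle_informative P then true else false.
Lemma EMb_true P : EMb P = true <-> P.
Proof. unfold EMb. destruct (excluded_middle_informative P); split; auto; discriminate. Qed.

Definition filterA (xs : list X) :=
  filter (fun a => EMb (sat X (env xs dx) a)) (atoms (length xs)).

Definition build (k : nat) (a s : list (formula L)) : formula L :=
  FAnd (bigAnd a) (FAnd (bigAnd (map (FEx k) s)) (FAll k (bigOr s))).

Fixpoint subseqs {A : Type} (l : list A) : list (list A) :=
  match l with
  | [] => [[]]
  | a :: l' => map (cons a) (subseqs l') ++ subseqs l'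
  end.

Lemma filter_subseqs {A : Type} (f : A -> bool) l : In (filter f l) (subseqs l).
Proof.
  induction l as [|a l IH]; simpl; auto.
  destruct (f a); apply in_or_app; [left; apply in_map| right]; auto.
Qed.

Fixpoint Chi (r k : nat) : list (formula L) :=
  match r with
  | 0 => map bigAnd (subseqs (atoms k))
  | S r' => map (fun ps => build k (fst ps) (snd ps))
                (list_prod (subseqs (atoms k)) (subseqs (Chi r' (S k))))
  end.

Fixpoint chi (r : nat) (xs : list X) : formula L :=
  match r with
  | 0 => bigAnd (filterA xs)
  | S r' => build (length xs) (filterA xs)
      (filter (fun c => EMb (exists x, c = chi r' (xs ++ [x]))) (Chi r' (S (length xs))))
  end.

Definition Sset r xs := filter (fun c => EMb (exists x, c = chi r (xs ++ [x]))) (Chi r (S (length xs))).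

Lemma chi_S r xs : chi (S r) xs = build (length xs) (filterA xs) (Sset r xs).
Proof. reflexivity. Qed.

Lemma chi_in r xs : In (chi r xs) (Chi r (length xs)).
Proof.
  destruct r as [|r].
  - simpl. apply in_map. apply filter_subseqs.
  - rewrite chi_S. simpl. apply (in_map (fun ps => build (length xs) (fst ps) (snd ps))
      _ (filterA xs, Sset r xs)). apply in_prod; apply filter_subseqs.
Qed.

Lemma Sset_spec r xs c : In c (Sset r xs) <-> exists x, c = chi r (xs ++ [x]).
Proof.
  unfold Sset. rewrite filter_In. rewrite EMb_true. split; [tauto|].
  intros [x Hx]. split; eauto. subst. pose proof (chi_in r (xs ++ [x])) as H.
  rewrite length_app in H. simpl in H. rewrite Nat.add_1_r in H. exact H.
Qed.

Lemma chi_free r : forall xs v, free_in v (chi r xs) -> v < length xs.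
Proof.
  induction r as [|r IH]; intros xs v Hv.
  - simpl in Hv. apply free_bigAnd in Hv. destruct Hv as [c [Hc Hv]].
    unfold filterA in Hc. apply filter_In in Hc. eapply atoms_free; [apply Hc|exact Hv].
  - rewrite chi_S in Hv. unfold build in Hv. simpl in Hv. destruct Hv as [Hv|[Hv|[Hne Hv]]].
    + apply free_bigAnd in Hv. destruct Hv as [c [Hc Hv]].
      unfold filterA in Hc. apply filter_In in Hc. eapply atoms_free; [apply Hc|exact Hv].
    + apply free_bigAnd in Hv. destruct Hv as [c [Hc Hv]]. apply in_map_iff in Hc.
      destruct Hc as [c' [<- Hc']]. apply Sset_spec in Hc'. destruct Hc' as [x ->].
      simpl in Hv. destruct Hv as [Hne Hv]. apply IH in Hv. rewrite length_app in Hv. simpl in Hv. lia.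
    + apply free_bigOr in Hv. destruct Hv as [c [Hc Hv]].
      apply Sset_spec in Hc. destruct Hc as [x ->].
      apply IH in Hv. rewrite length_app in Hv. simpl in Hv. lia.
Qed.

Lemma filterA_P xs : forall c, In c (filterA xs) -> is_P c.
Proof. intros c Hc. unfold filterA in Hc. apply filter_In in Hc. eapply atoms_P, Hc. Qed.

Lemma chi_P r : forall xs, is_P (chi r xs).
Proof.
  induction r as [|r IH]; intros xs.
  - simpl. apply P_bigAnd, filterA_P.
  - rewrite chi_S. unfold build. simpl. split; [apply P_bigAnd, filterA_P| split].
    + apply P_bigAnd. intros c Hc. apply in_map_iff in Hc. destruct Hc as [c' [<- Hc']].
      apply Sset_spec in Hc'. destruct Hc' as [x ->]. simpl. apply IH.
    + apply P_bigOr. intros c Hc. apply Sset_spec in Hc. destruct Hc as [x ->]. apply IH.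
Qed.

Lemma sat_filterA xs : sat X (env xs dx) (bigAnd (filterA xs)).
Proof.
  apply sat_bigAnd. intros c Hc. unfold filterA in Hc. apply filter_In in Hc.
  destruct Hc as [_ Hc]. apply (proj1 (EMb_true _)) in Hc. exact Hc.
Qed.

Lemma chi_sat r : forall xs, sat X (env xs dx) (chi r xs).
Proof.
  induction r as [|r IH]; intros xs.
  - apply sat_filterA.
  - rewrite chi_S. unfold build. cbn [sat]. split; [apply sat_filterA| split].
    + apply sat_bigAnd. intros c Hc. apply in_map_iff in Hc. destruct Hc as [c' [<- Hc']].
      apply Sset_spec in Hc'. destruct Hc' as [x ->]. cbn [sat]. exists x.
      refine (proj2 (sat_ext X _ _ (env (xs++[x]) dx) _) (IH _)).
      intros v Hv. apply env_upd. apply chi_free in Hv. rewrite length_app in Hv. simpl in Hv. lia.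
    + intro a. apply sat_bigOr. exists (chi r (xs ++ [a])). split.
      * apply Sset_spec; eauto.
      * refine (proj2 (sat_ext X _ _ (env (xs++[a]) dx) _) (IH _)).
        intros v Hv. apply env_upd. apply chi_free in Hv. rewrite length_app in Hv. simpl in Hv. lia.
Qed.

Lemma comb_idx (xs : list X) (ys : list Y) x y : In (x,y) (combine xs ys) -> length ys = length xs ->
  exists i, i < length xs /\ nth i xs dx = x /\ nth i ys dy = y.
Proof.
  intros H Hl. destruct (In_nth _ _ (dx,dy) H) as [i [Hi Hn]].
  rewrite length_combine in Hi. rewrite combine_nth in Hn by auto. inversion Hn.
  exists i. split; [lia|auto].
Qed.

Lemma F2_idx (xs : list X) (ys : list Y) us vs : length ys = length xs ->
  Forall2 (fun x y => In (x,y) (combine xs ys)) us vs ->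
  exists t, (forall j, In j t -> j < length xs) /\ map (fun j => nth j xs dx) t = us
    /\ map (fun j => nth j ys dy) t = vs.
Proof.
  intros Hl HF. induction HF as [|u v us vs Huv HF IH].
  - exists []. simpl. split; auto. intros j [].
  - destruct (comb_idx xs ys u v Huv Hl) as [i [Hi [Hu Hv]]].
    destruct IH as [t [Ht [Ht1 Ht2]]]. exists (i :: t). simpl. split.
    + intros j [<-|Hj]; auto.
    + split; f_equal; auto.
Qed.

Lemma map_nth_seq {A : Type} (l : list A) d : forall t,
  map (fun m => nth (nth m t 0) l d) (seq 0 (length t)) = map (fun j => nth j l d) t.
Proof.
  induction t as [|a t IH]; simpl; auto. f_equal. rewrite <- seq_shift, map_map. simpl. exact IH.
Qed.

Lemma lvl0 xs ys : length ys = length xs -> sat Y (env ys dy) (bigAnd (filterA xs)) ->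
  PCl X Y (combine xs ys).
Proof.
  intros Hl Hs.
  assert (Hat : forall a, In a (atoms (length xs)) -> sat X (env xs dx) a -> sat Y (env ys dy) a).
  { intros a Ha HaX. apply (proj1 (sat_bigAnd _ _ _) Hs). unfold filterA. apply filter_In.
    split; auto. apply (proj2 (EMb_true _)); auto. }
  unfold PCl. split; [|split].
  - intros x y y' H1 H2. destruct (comb_idx _ _ _ _ H1 Hl) as [i [Hi [<- <-]]].
    destruct (comb_idx _ _ _ _ H2 Hl) as [j [Hj [Hx <-]]].
    pose proof (Hat (FEq i j) (proj1 (atoms_eq _ i j Hi Hj))) as HH. cbn [sat] in HH. unfold env in HH.
    apply HH. auto.
  - intros x x' y H1 H2. destruct (comb_idx _ _ _ _ H1 Hl) as [i [Hi [<- <-]]].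
    destruct (comb_idx _ _ _ _ H2 Hl) as [j [Hj [<- Hy]]].
    apply NNPP; intro Hne.
    pose proof (Hat (FNeq i j) (proj2 (atoms_eq _ i j Hi Hj))) as HH. cbn [sat] in HH. unfold env in HH.
    exact (HH Hne (eq_sym Hy)).
  - intros R us vs Hlen HF HX. destruct (F2_idx xs ys us vs Hl HF) as [t [Ht [Hu Hv]]].
    assert (Hlt : length t = arity L R) by (rewrite <- Hlen, <- Hu, length_map; auto).
    pose proof (Hat _ (atoms_rel _ R t Hlt Ht)) as HH. cbn [sat] in HH. unfold env in HH.
    rewrite <- Hlt in HH. rewrite !map_nth_seq in HH. rewrite Hu, Hv in HH. auto.
Qed.

Lemma combine_app1 (xs : list X) (ys : list Y) x y : length xs = length ys ->
  combine (xs ++ [x]) (ys ++ [y]) = combine xs ys ++ [(x,y)].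
Proof.
  revert ys; induction xs as [|a xs IH]; intros [|b ys] Hl; simpl in *; try discriminate; auto.
  f_equal. apply IH. lia.
Qed.

Lemma chi_W r : forall xs ys, length ys = length xs -> sat Y (env ys dy) (chi r xs) ->
  W X Y r (combine xs ys).
Proof.
  induction r as [|r IH]; intros xs ys Hl Hs.
  - simpl. apply lvl0; auto.
  - rewrite chi_S in Hs. unfold build in Hs. cbn [sat] in Hs. destruct Hs as [H0 [Hex Hall]].
    simpl. split; [apply lvl0; auto| split].
    + intro x.
      assert (Hin : In (FEx (length xs) (chi r (xs ++ [x]))) (map (FEx (length xs)) (Sset r xs)))
        by (apply in_map; apply Sset_spec; eauto).
      pose proof (proj1 (sat_bigAnd _ _ _) Hex _ Hin) as Hy. cbn [sat] in Hy.
      destruct Hy as [y Hy]. exists y. rewrite <- combine_app1 by auto.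
      apply IH. rewrite !length_app; simpl; lia.
      refine (proj1 (sat_ext Y _ _ (env (ys++[y]) dy) _) Hy).
      intros v Hv. rewrite <- Hl. apply env_upd.
      apply chi_free in Hv. rewrite length_app in Hv; simpl in Hv; lia.
    + intro y. specialize (Hall y). apply sat_bigOr in Hall. destruct Hall as [c [Hc Hcs]].
      apply Sset_spec in Hc. destruct Hc as [x ->]. exists x. rewrite <- combine_app1 by auto.
      apply IH. rewrite !length_app; simpl; lia.
      refine (proj1 (sat_ext Y _ _ (env (ys++[y]) dy) _) Hcs).
      intros v Hv. rewrite <- Hl. apply env_upd.
      apply chi_free in Hv. rewrite length_app in Hv; simpl in Hv; lia.
Qed.

Lemma lll_W : lll is_P X Y -> forall n, W X Y n [].
Proof.
  intros H n. change (W X Y n (combine (@nil X) (@nil Y))). apply chi_W; auto.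
  apply H.
  - apply chi_P.
  - intros v Hv. apply chi_free in Hv. simpl in Hv. lia.
  - intro e. refine (proj2 (sat_ext X _ _ (env [] dx) _) (chi_sat _ _)).
    intros v Hv. apply chi_free in Hv. simpl in Hv. lia.
Qed.

End H.

Lemma core (L : language) (X Y : structure L) (HL : finite_language L)
  (HX : inhabited X) (HY : inhabited Y) :
  (fin_cond X Y <-> (forall n, II_wins n X Y)) /\
  (fin_cond X Y <-> lll is_P X Y) /\
  (fin_cond X Y <-> lll is_N Y X).
Proof.
  destruct HL as [lR HlR]. destruct HX as [x0]. destruct HY as [y0].
  assert (E1 : fin_cond X Y <-> forall n, W X Y n []).
  { split; [apply fin_W | apply W_fin]. }
  assert (E2 : fin_cond X Y <-> lll is_P X Y).
  { rewrite E1. split; [apply W_lll; constructor; auto | apply (lll_W X Y lR HlR x0 y0)]. }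
  split; [|split].
  - rewrite E1. split; intros H n; [apply (W_II X Y x0 y0) | apply (II_W X Y x0)]; auto.
  - exact E2.
  - rewrite E2. split; [apply lll_P_N | apply lll_N_P]; constructor; auto.
Qed.

Theorem theorem5p1 (L : language) (X Y : structure L)
    (HL : finite_language L) (HX : inhabited X) (HY : inhabited Y) :
  ((fin_cond X Y <-> (forall n, II_wins n X Y)) /\
   (fin_cond X Y <-> lll is_P X Y) /\
   (fin_cond X Y <-> lll is_N Y X))
  /\
  (((fin_cond X Y /\ fin_cond Y X) <->
      (forall n, II_wins n X Y /\ II_wins n Y X)) /\
   ((fin_cond X Y /\ fin_cond Y X) <-> equivF is_P X Y) /\
   ((fin_cond X Y /\ fin_cond Y X) <-> equivF is_N X Y) /\
   ((fin_cond X Y /\ fin_cond Y X) <-> equivF is_PN X Y) /\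
   ((fin_cond X Y /\ fin_cond Y X) <-> lll is_PN X Y)).
Proof.
  destruct (core L X Y HL HX HY) as [A1 [A2 A3]].
  destruct (core L Y X HL HY HX) as [B1 [B2 B3]].
  split; [tauto|].
  split; [|split; [|split; [|split]]].
  - split.
    + intros [a b] n. split; [apply A1 | apply B1]; auto.
    + intros H. split; [apply A1 | apply B1]; intro n; apply H.
  - split.
    + intros [a b] phi HP Hs. split; [apply (proj1 A2 a) | apply (proj1 B2 b)]; auto.
    + intros H. split; [apply A2 | apply B2]; intros phi HP Hs Hh; apply (H phi HP Hs); auto.
  - split.
    + intros [a b] phi HP Hs. split; [apply (proj1 B3 b) | apply (proj1 A3 a)]; auto.
    + intros H. split; [apply A3 | apply B3]; intros phi HP Hs Hh; apply (H phi HP Hs); auto.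
  - split.
    + intros [a b] phi [HP|HN] Hs.
      * split; [apply (proj1 A2 a) | apply (proj1 B2 b)]; auto.
      * split; [apply (proj1 B3 b) | apply (proj1 A3 a)]; auto.
    + intros H. split; [apply A2 | apply B2]; intros phi HP Hs Hh; apply (H phi (or_introl HP) Hs); auto.
  - split.
    + intros [a b] phi [HP|HN] Hs.
      * apply (proj1 A2 a); auto.
      * apply (proj1 B3 b); auto.
    + intros H. split; [apply A2 | apply B3]; intros phi HP Hs Hh.
      * apply (H phi (or_introl HP) Hs); auto.
      * apply (H phi (or_intror HP) Hs); auto.
Qed.
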